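(* Consider a duopoly in which sellers have qualities $q_1>q_2$ and each customer is either of BICA type or of greedy type, all customers having a common willingness-to-pay distribution (independent of type) with a monotone hazard rate. If strictly more than half of the customer population is of BICA type, then seller $1$ gradient-dominates seller $2$, and there exists a local Nash equilibrium $\mathbf p^*$ with $p_1^*>p_2^*$.
   Context: Two sellers $1,2$ each sell one item at prices $p_1,p_2\in[0,\bar v]$; a unit mass of customers, each with willingness-to-pay $w_c$ drawn from a common distribution with CDF $F$ and Lipschitz continuous density $f$ on $[0,\bar v]$. A BICA customer considers the sellers with price at most $w_c$ and buys the highest-quality one among them (breaking quality ties by lower price, then arbitrarily). A greedy customer considers the sellers with price at most $w_c$ and buys the cheapest one (breaking price ties by quality, then arbitrarily). Customers with no seller priced at most $w_c$ buy nothing. $R_i(\mathbf p)$ is seller $i$'s expected revenue, $g_i(p_i,p_{-i})=\partial R_i/\partial p_i$. Seller $1$ gradient-dominates seller $2$ if for all $p\in(0,\bar v)$, $g_1(p_1=p,p_2=0)>\lim_{q\uparrow p}g_2(p_1=p,p_2=q)$. Local Nash equilibrium (LNE): $\mathbf p$ such that there exist open neighborhoods $\mathcal U_i\ni p_i$ with $p_i\in\arg\max_{p\in\overline{\mathcal U_i}}R_i(p,p_{-i})$ for $i=1,2$. Monotone hazard rate: $f(p)/(1-F(p))$ non-decreasing. *)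

(* Defs.v *)
From Stdlib Require Import Reals Lra.
From Coquelicot Require Import Coquelicot.
Open Scope R_scope.

Inductive seller := Seller1 | Seller2.

(** A BICA customer with willingness-to-pay [w] considers the sellers priced
    at most [w] and buys the highest-quality one; quality ties are broken by
    lower price, then arbitrarily (here: seller 1; this case only arises when
    [q1 = q2]). *)
Definition bica_choice (q1 q2 p1 p2 w : R) : option seller :=
  match Rle_dec p1 w, Rle_dec p2 w with
  | left _, left _ =>
      if Rlt_dec q2 q1 then Some Seller1
      else if Rlt_dec q1 q2 then Some Seller2
      else if Rlt_dec p1 p2 then Some Seller1
      else if Rlt_dec p2 p1 then Some Seller2
      else Some Seller1
  | left _, right _ => Some Seller1
  | right _, left _ => Some Seller2
  | right _, right _ => None
  end.

(** A greedy customer considers the sellers priced at most [w] and buys the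
    cheapest one; price ties are broken by quality, then arbitrarily (here:
    seller 1; only arises when [q1 = q2]). *)
Definition greedy_choice (q1 q2 p1 p2 w : R) : option seller :=
  match Rle_dec p1 w, Rle_dec p2 w with
  | left _, left _ =>
      if Rlt_dec p1 p2 then Some Seller1
      else if Rlt_dec p2 p1 then Some Seller2
      else if Rlt_dec q2 q1 then Some Seller1
      else if Rlt_dec q1 q2 then Some Seller2
      else Some Seller1
  | left _, right _ => Some Seller1
  | right _, left _ => Some Seller2
  | right _, right _ => None
  end.

Definition buys (c : option seller) (i : seller) : R :=
  match c, i with
  | Some Seller1, Seller1 => 1
  | Some Seller2, Seller2 => 1
  | _, _ => 0
  end.

Definition price (p1 p2 : R) (i : seller) : R :=
  match i with Seller1 => p1 | Seller2 => p2 end.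

Definition cdf (f : R -> R) (x : R) : R := RInt f 0 x.

(** Expected revenue of seller [i] at prices [(p1,p2)]: a unit mass of
    customers, a fraction [alpha] of BICA type and [1 - alpha] of greedy type,
    willingness-to-pay with density [f] on [0, vbar] (independent of type). *)
Definition revenue (q1 q2 alpha vbar : R) (f : R -> R) (i : seller)
    (p1 p2 : R) : R :=
  price p1 p2 i *
    (alpha * RInt (fun w => f w * buys (bica_choice q1 q2 p1 p2 w) i) 0 vbar
     + (1 - alpha) *
         RInt (fun w => f w * buys (greedy_choice q1 q2 p1 p2 w) i) 0 vbar).

(** Seller 1 gradient-dominates seller 2:
    for all p in (0, vbar), g_1(p1 = p, p2 = 0) > lim_{q -> p^-} g_2(p1 = p, p2 = q),
    where g_i is the partial derivative of R_i in p_i (the limit is required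
    to exist). [R1], [R2] take the prices in the order (p1, p2). *)
Definition gradient_dominates (R1 R2 : R -> R -> R) (vbar : R) : Prop :=
  forall p, 0 < p < vbar ->
    exists L : R,
      filterlim (fun q => Derive (fun y => R2 p y) q) (at_left p) (locally L)
      /\ Derive (fun x => R1 x 0) p > L.

Definition is_LNE (R1 R2 : R -> R -> R) (vbar p1 p2 : R) : Prop :=
  0 <= p1 <= vbar /\ 0 <= p2 <= vbar /\
  (exists e, 0 < e /\ forall x, 0 <= x <= vbar -> Rabs (x - p1) <= e ->
       R1 x p2 <= R1 p1 p2) /\
  (exists e, 0 < e /\ forall y, 0 <= y <= vbar -> Rabs (y - p2) <= e ->
       R2 p1 y <= R2 p1 p2).

(* Main.v *)
Require Import Defs.
From Stdlib Require Import Reals Lra.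
From Coquelicot Require Import Coquelicot.
Open Scope R_scope.

Lemma lip_cont (g: R->R) K : (forall x y, Rabs (g x - g y) <= K * Rabs (x-y)) -> forall x, continuous g x.
Proof.
  intros H x. apply filterlim_locally. intros eps.
  assert (HK : 0 < Rabs K + 1) by (pose proof (Rabs_pos K); lra).
  assert (Hd : 0 < eps / (Rabs K + 1)) by (apply Rdiv_lt_0_compat; [apply cond_pos|lra]).
  exists (mkposreal _ Hd). intros y Hy.
  change (Rabs (g y - g x) < eps).
  change (Rabs (y - x) < eps / (Rabs K + 1)) in Hy.
  pose proof (H y x). pose proof (Rabs_pos (y-x)). pose proof (Rle_abs K).
  assert (K * Rabs (y-x) <= Rabs K * Rabs (y - x)) by (apply Rmult_le_compat_r; lra).
  assert (Rabs (y-x) * (Rabs K + 1) < eps).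
  { apply Rmult_lt_reg_r with (/ (Rabs K + 1)). apply Rinv_0_lt_compat; lra.
    rewrite Rmult_assoc, Rinv_r by lra. unfold Rdiv in Hy; lra. }
  nra.
Qed.

Lemma at_left_le x : filter_le (at_left x) (locally x).
Proof. intros P [d H]. exists d. intros y Hy _. apply H. exact Hy. Qed.
Lemma cplus (f g: R->R) x: continuous f x -> continuous g x -> continuous (fun y => f y + g y) x.
Proof. exact (continuous_plus f g x). Qed.
Lemma cminus (f g: R->R) x: continuous f x -> continuous g x -> continuous (fun y => f y - g y) x.
Proof. exact (continuous_minus f g x). Qed.
Lemma cmult (f g: R->R) x: continuous f x -> continuous g x -> continuous (fun y => f y * g y) x.
Proof. exact (continuous_mult f g x). Qed.
Lemma cconst (c x: R): continuous (fun _ => c) x.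
Proof. exact (continuous_const c x). Qed.
Lemma cid (x: R): continuous (fun y => y) x.
Proof. exact (continuous_id x). Qed.

Lemma RCh (g : R -> R) a b c : ex_RInt g a b -> ex_RInt g b c -> RInt g a b + RInt g b c = RInt g a c.
Proof. intros H1 H2. exact (RInt_Chasles (V:=R_CompleteNormedModule) g a b c H1 H2). Qed.

Lemma int_zero (g : R -> R) a b : a <= b -> (forall w, a < w < b -> g w = 0) ->
  ex_RInt g a b /\ RInt g a b = 0.
Proof.
  intros Hab H.
  assert (E: forall x, Rmin a b < x < Rmax a b -> (fun _ => 0) x = g x).
  { intros x Hx. rewrite Rmin_left, Rmax_right in Hx by lra. symmetry; apply H; lra. }
  split.
  - apply (ex_RInt_ext _ _ _ _ E). apply ex_RInt_const.
  - rewrite <- (RInt_ext _ _ _ _ E). rewrite RInt_const. unfold scal; simpl; unfold mult; simpl; ring.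
Qed.

Lemma int_ind (f fc ind : R->R) vbar a b : (forall x, continuous fc x) ->
  (forall x, 0<=x<=vbar -> f x = fc x) -> 0<=a<=b -> b<=vbar ->
  (forall w, 0<w<vbar -> (a<w<b -> ind w = 1) /\ (w<a \/ b<w -> ind w = 0)) ->
  RInt (fun w => f w * ind w) 0 vbar = RInt fc 0 b - RInt fc 0 a.
Proof.
  intros Hc Heq Ha Hb Hi.
  pose (g := fun w => fc w * ind w).
  rewrite (RInt_ext _ g).
  2:{ intros x Hx. rewrite Rmin_left, Rmax_right in Hx by lra. unfold g. rewrite Heq by lra. reflexivity. }
  destruct (int_zero g 0 a) as [E1 I1]; [lra| intros w Hw; unfold g; rewrite (proj2 (Hi w ltac:(lra))) by lra; ring |].
  destruct (int_zero g b vbar) as [E3 I3]; [lra| intros w Hw; unfold g; rewrite (proj2 (Hi w ltac:(lra))) by lra; ring |].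
  assert (Eg: forall x, Rmin a b < x < Rmax a b -> fc x = g x).
  { intros x Hx. rewrite Rmin_left, Rmax_right in Hx by lra. unfold g. rewrite (proj1 (Hi x ltac:(lra))) by lra. ring. }
  assert (Ec: forall u v, ex_RInt fc u v).
  { intros u v. apply (@ex_RInt_continuous R_CompleteNormedModule). intros; apply Hc. }
  assert (E2: ex_RInt g a b) by (apply (ex_RInt_ext _ _ _ _ Eg); apply Ec).
  assert (C1: RInt g 0 a + RInt g a vbar = RInt g 0 vbar).
  { apply RCh; auto. apply (ex_RInt_Chasles _ _ b); auto. }
  assert (C2: RInt g a b + RInt g b vbar = RInt g a vbar).
  { apply RCh; auto. }
  assert (C3: RInt fc 0 a + RInt fc a b = RInt fc 0 b).
  { apply RCh; auto. }
  rewrite <- (RInt_ext _ _ _ _ Eg) in C2.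
  lra.
Qed.

Lemma rise_right (g g' : R->R) x0 b : x0 < b -> (forall x, is_derive g x (g' x)) ->
  continuous g' x0 -> 0 < g' x0 -> exists y, x0 < y <= b /\ g x0 < g y.
Proof.
  intros Hb Hd Hc Hp.
  assert (He: 0 < g' x0 / 2) by lra.
  destruct (proj1 (filterlim_locally _ _) Hc (mkposreal _ He)) as [d Hd'].
  pose (y := Rmin b (x0 + d/2)).
  assert (Hy: x0 < y <= b).
  { unfold y. pose proof (cond_pos d). unfold Rmin; destruct Rle_dec; lra. }
  assert (Hy2: y - x0 < d).
  { unfold y. pose proof (cond_pos d). pose proof (Rmin_r b (x0 + d/2)). lra. }
  destruct (MVT_cor2 g g' x0 y) as [c [Hc1 Hc2]]; [lra| |].
  { intros c _. apply is_derive_Reals. apply Hd. }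
  assert (Hgc: Rabs (g' c - g' x0) < g' x0 / 2).
  { apply (Hd' c). change (Rabs (c - x0) < d). rewrite Rabs_right; lra. }
  apply Rabs_def2 in Hgc.
  exists y. split; [lra|]. nra.
Qed.

Lemma rise_left (g g' : R->R) x0 a : a < x0 -> (forall x, is_derive g x (g' x)) ->
  continuous g' x0 -> g' x0 < 0 -> exists y, a <= y < x0 /\ g x0 < g y.
Proof.
  intros Hb Hd Hc Hp.
  assert (He: 0 < - g' x0 / 2) by lra.
  destruct (proj1 (filterlim_locally _ _) Hc (mkposreal _ He)) as [d Hd'].
  pose (y := Rmax a (x0 - d/2)).
  assert (Hy: a <= y < x0).
  { unfold y. pose proof (cond_pos d). unfold Rmax; destruct Rle_dec; lra. }
  assert (Hy2: x0 - y < d).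
  { unfold y. pose proof (cond_pos d). pose proof (Rmax_r a (x0 - d/2)). lra. }
  destruct (MVT_cor2 g g' y x0) as [c [Hc1 Hc2]]; [lra| |].
  { intros c _. apply is_derive_Reals. apply Hd. }
  assert (Hgc: Rabs (g' c - g' x0) < - g' x0 / 2).
  { apply (Hd' c). change (Rabs (c - x0) < d). rewrite Rabs_left; lra. }
  apply Rabs_def2 in Hgc.
  exists y. split; [lra|]. nra.
Qed.

Lemma loc_int a b x : a < x < b -> locally x (fun y => a < y < b).
Proof.
  intros H. assert (Hp: 0 < Rmin (x - a) (b - x)) by (apply Rmin_glb_lt; lra).
  exists (mkposreal _ Hp). intros y Hy. change (Rabs (y - x) < Rmin (x - a) (b - x)) in Hy.
  pose proof (Rmin_l (x-a) (b-x)). pose proof (Rmin_r (x-a) (b-x)).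
  apply Rabs_def2 in Hy. lra.
Qed.

Ltac indtac := intros w Hw;
  unfold bica_choice, greedy_choice;
  repeat match goal with
  | |- context[Rle_dec ?a ?b] => destruct (Rle_dec a b)
  | |- context[Rlt_dec ?a ?b] => destruct (Rlt_dec a b)
  end; simpl; split; intros; lra.

Theorem corollary4p2 (vbar q1 q2 alpha : R) (f : R -> R) :
  0 < vbar ->
  q2 < q1 ->
  1 / 2 < alpha <= 1 ->
  (* f is a probability density on [0, vbar] *)
  (forall x, 0 <= x <= vbar -> 0 <= f x) ->
  RInt f 0 vbar = 1 ->
  (* f is Lipschitz continuous on [0, vbar] *)
  (exists K, forall x y, 0 <= x <= vbar -> 0 <= y <= vbar ->
     Rabs (f x - f y) <= K * Rabs (x - y)) ->
  (* vbar is the top of the support: F(p) < 1 for p < vbar *)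
  (forall p, 0 <= p < vbar -> cdf f p < 1) ->
  (* monotone hazard rate *)
  (forall x y, 0 <= x <= y -> y < vbar ->
     f x / (1 - cdf f x) <= f y / (1 - cdf f y)) ->
  gradient_dominates (revenue q1 q2 alpha vbar f Seller1)
                     (revenue q1 q2 alpha vbar f Seller2) vbar /\
  exists p1 p2,
    is_LNE (revenue q1 q2 alpha vbar f Seller1)
           (revenue q1 q2 alpha vbar f Seller2) vbar p1 p2 /\ p2 < p1.
Proof.
  intros Hv Hq Ha Hfp Hint [K HK] Hcdf _.
  pose (cl := fun x => Rmax 0 (Rmin vbar x)).
  assert (Hcl: forall x, 0 <= cl x <= vbar).
  { intros x; unfold cl, Rmax, Rmin; repeat destruct Rle_dec; lra. }
  assert (Hcl2: forall x y, Rabs (cl x - cl y) <= Rabs (x - y)).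
  { intros x y; unfold cl, Rmax, Rmin; repeat destruct Rle_dec; unfold Rabs;
    repeat destruct Rcase_abs; lra. }
  assert (Hcl3: forall x, 0 <= x <= vbar -> cl x = x).
  { intros x Hx; unfold cl, Rmax, Rmin; repeat destruct Rle_dec; lra. }
  pose (fc := fun x => f (cl x)).
  assert (Hfc: forall x, continuous fc x).
  { apply (lip_cont _ (Rabs K)). intros x y. unfold fc.
    eapply Rle_trans. apply HK; apply Hcl.
    pose proof (Rle_abs K). pose proof (Rabs_pos K). pose proof (Rabs_pos (cl x - cl y)).
    pose proof (Hcl2 x y). nra. }
  assert (Hfeq: forall x, 0 <= x <= vbar -> f x = fc x).
  { intros x Hx; unfold fc; rewrite Hcl3; auto. }
  assert (Hfc0: forall x, 0 <= fc x) by (intros; apply Hfp, Hcl).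
  pose (Fc := (fun x => RInt fc 0 x) : R -> R).
  assert (Ec : forall u v, ex_RInt fc u v).
  { intros u v. apply (@ex_RInt_continuous R_CompleteNormedModule). intros; apply Hfc. }
  assert (HFd: forall x, is_derive Fc x (fc x)).
  { intros x. apply (is_derive_RInt (V:=R_NormedModule) fc Fc 0 x).
    - apply filter_forall. intros y. apply (RInt_correct (V:=R_CompleteNormedModule)). apply Ec.
    - apply Hfc. }
  assert (HFc: forall x, continuous Fc x).
  { intros x. apply (@ex_derive_continuous R_AbsRing R_NormedModule). exists (fc x). apply HFd. }
  assert (HF0: Fc 0 = 0).
  { unfold Fc. rewrite RInt_point. reflexivity. }
  assert (HFv: Fc vbar = 1).
  { unfold Fc. rewrite <- Hint. apply RInt_ext. intros x Hx.
    rewrite Rmin_left, Rmax_right in Hx by lra. symmetry; apply Hfeq; lra. }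
  assert (HFlt: forall p, 0 <= p < vbar -> Fc p < 1).
  { intros p Hp. specialize (Hcdf p Hp). unfold cdf in Hcdf. unfold Fc.
    rewrite <- (RInt_ext f) . exact Hcdf. intros x Hx.
    rewrite Rmin_left, Rmax_right in Hx by lra. apply Hfeq; lra. }
  assert (HR1: forall x p2, 0 <= p2 < x -> x <= vbar ->
     revenue q1 q2 alpha vbar f Seller1 x p2 = alpha * (x * (1 - Fc x))).
  { intros x p2 H1 H2. unfold revenue, price.
    rewrite (int_ind f fc _ vbar x vbar) by (auto; try lra; indtac).
    rewrite (int_ind f fc _ vbar 0 0) by (auto; try lra; indtac).
    fold (Fc x) (Fc vbar) (Fc 0). rewrite HFv, HF0. ring. }
  assert (HR2a: forall p1 y, 0 <= y < p1 -> p1 <= vbar ->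
     revenue q1 q2 alpha vbar f Seller2 p1 y =
       y * (alpha * (Fc p1 - Fc y) + (1 - alpha) * (1 - Fc y))).
  { intros p1 y H1 H2. unfold revenue, price.
    rewrite (int_ind f fc _ vbar y p1) by (auto; try lra; indtac).
    rewrite (int_ind f fc _ vbar y vbar) by (auto; try lra; indtac).
    fold (Fc y) (Fc vbar) (Fc p1). rewrite HFv. ring. }
  assert (HR2b: forall p1 y, 0 <= p1 <= y ->
     revenue q1 q2 alpha vbar f Seller2 p1 y = 0).
  { intros p1 y H1. unfold revenue, price.
    rewrite (int_ind f fc _ vbar 0 0) by (auto; try lra; indtac).
    rewrite (int_ind f fc _ vbar 0 0) by (auto; try lra; indtac).
    ring. }
  assert (HdG: forall x, is_derive (fun x => x * (1 - Fc x)) x (1 - Fc x - x * fc x)).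
  { intros x. auto_derive.
    - exists (fc x); apply HFd.
    - replace (Derive (fun x0 => Fc x0) x) with (fc x) by (symmetry; apply is_derive_unique; apply HFd). ring. }
  assert (HdH: forall p x, is_derive (fun y => y*(alpha*(Fc p - Fc y) + (1-alpha)*(1-Fc y))) x
             (alpha*(Fc p - Fc x) + (1-alpha)*(1-Fc x) - x * fc x)).
  { intros p x. auto_derive.
    - split; [exists (fc x); apply HFd| split; [exists (fc x); apply HFd| exact I]].
    - replace (Derive (fun x0 => Fc x0) x) with (fc x) by (symmetry; apply is_derive_unique; apply HFd). ring. }
  assert (HcH: forall p x, continuous (fun q => alpha*(Fc p - Fc q) + (1-alpha)*(1-Fc q) - q * fc q) x).
  { intros p x. apply cminus; [apply cplus; apply cmult|apply cmult]; try apply cconst;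
      try apply cminus; try apply cconst; auto; apply cid. }
  split.
  - intros p Hp.
    pose (H := fun q => alpha*(Fc p - Fc q) + (1-alpha)*(1-Fc q) - q * fc q).
    exists (H p). split.
    + apply (filterlim_ext_loc H).
      * exists (mkposreal p (proj1 Hp)). intros q Hbq Hqp.
        change (Rabs (q - p) < p) in Hbq. apply Rabs_def2 in Hbq.
        symmetry. rewrite (Derive_ext_loc _ (fun y => y*(alpha*(Fc p - Fc y) + (1-alpha)*(1-Fc y)))).
        { apply is_derive_unique. apply HdH. }
        apply (filter_imp (fun y => 0 < y < p)); [|apply loc_int; lra].
        intros y Hy. apply HR2a; lra.
      * apply (filterlim_filter_le_1 _ (at_left_le p)). apply HcH.
    + rewrite (Derive_ext_loc _ (fun x => alpha * (x * (1 - Fc x)))).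
      2:{ apply (filter_imp (fun y => 0 < y < vbar)); [|apply loc_int; lra].
          intros y Hy. apply HR1; lra. }
      rewrite (is_derive_unique _ _ (alpha * (1 - Fc p - p * fc p))).
      2:{ apply (is_derive_scal (fun x => x * (1 - Fc x))). apply HdG. }
      unfold H. specialize (HFlt p ltac:(lra)). specialize (Hfc0 p).
      assert (0 < (2*alpha - 1) * (1 - Fc p)) by (apply Rmult_lt_0_compat; lra).
      assert (0 <= (1 - alpha) * (p * fc p)) by (apply Rmult_le_pos; [lra| apply Rmult_le_pos; lra]).
      nra.
  - pose (g := fun x => x * (1 - Fc x)).
    destruct (continuous_ab_maj_consistent g 0 vbar) as [p1 [Hmax Hp1]]; [lra| |].
    { intros c _. apply (@ex_derive_continuous R_AbsRing R_NormedModule). eexists; apply HdG. }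
    assert (Hg2: 0 < g (vbar/2)).
    { unfold g. specialize (HFlt (vbar/2) ltac:(lra)). apply Rmult_lt_0_compat; lra. }
    pose proof (Hmax (vbar/2) ltac:(lra)) as Hgm.
    assert (Hp1b: 0 < p1 < vbar).
    { split; apply Rnot_le_lt; intro Hc.
      - assert (p1 = 0) by lra. subst p1. unfold g in Hgm, Hg2. lra.
      - assert (p1 = vbar) by lra. subst p1. unfold g in Hgm, Hg2. rewrite HFv in Hgm. lra. }
    assert (Hd1: 1 - Fc p1 - p1 * fc p1 <= 0).
    { apply Rnot_lt_le. intro Hc.
      destruct (rise_right g (fun x => 1 - Fc x - x * fc x) p1 vbar) as [y [Hy1 Hy2]]; auto; try lra.
      - apply cminus; [apply cminus; [apply cconst| auto]| apply cmult; [apply cid| auto]].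
      - specialize (Hmax y ltac:(lra)). lra. }
    pose (h := fun y => y*(alpha*(Fc p1 - Fc y) + (1-alpha)*(1-Fc y))).
    assert (HF1: Fc p1 < 1) by (apply HFlt; lra).
    destruct (rise_left h (fun x => alpha*(Fc p1 - Fc x) + (1-alpha)*(1-Fc x) - x * fc x) p1 0)
      as [y0 [Hy01 Hy02]]; try lra.
    { apply HdH. }
    { apply HcH. }
    { nra. }
    destruct (continuous_ab_maj_consistent h 0 p1) as [p2 [Hmax2 Hp2]]; [lra| |].
    { intros c _. apply (@ex_derive_continuous R_AbsRing R_NormedModule). eexists; apply HdH. }
    pose proof (Hmax2 y0 ltac:(lra)).
    assert (Hp2b: p2 < p1).
    { destruct (Rle_lt_or_eq_dec p2 p1) as [Hl|He]; [lra|exact Hl|]. subst p2. lra. }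
    assert (Hh1: 0 <= h p1).
    { unfold h. replace (Fc p1 - Fc p1) with 0 by ring. apply Rmult_le_pos; nra. }
    pose proof (Hmax2 p1 ltac:(lra)).
    exists p1, p2. split; [|lra]. unfold is_LNE.
    split; [lra|]. split; [lra|]. split.
    + exists ((p1 - p2)/2). split; [lra|]. intros x Hx Hax.
      assert (p2 < x) by (unfold Rabs in Hax; destruct Rcase_abs; lra).
      rewrite (HR1 x p2), (HR1 p1 p2) by lra.
      apply Rmult_le_compat_l; [lra|]. apply (Hmax x). lra.
    + exists 1. split; [lra|]. intros y Hy _.
      rewrite (HR2a p1 p2) by lra. fold (h p2).
      destruct (Rlt_dec y p1) as [Hl|Hl].
      * rewrite (HR2a p1 y) by lra. apply (Hmax2 y). lra.
      * rewrite HR2b by lra. lra.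
Qed.
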